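(* Let $(E,\tau)$ be a uniquely generated violator space. Then each equivalence class of the relation $X\sim Y\iff\tau(X)=\tau(Y)$ on $2^E$ is closed under intersection and under union: if $\tau(X)=\tau(Y)$ then $\tau(X\cap Y)=\tau(X\cup Y)=\tau(X)$.
   Context: $E$ is a finite set and $\tau:2^E\to 2^E$. $(E,\tau)$ is a violator space if (C1) $Z\subseteq\tau(Z)$ for all $Z\subseteq E$, and (C22) for all $F,G\subseteq E$, $F\subseteq G\subseteq\tau(F)$ implies $\tau(G)=\tau(F)$. For $X\subseteq E$, a generator of $X$ is any $B\subseteq E$ with $\tau(B)=\tau(X)$; a basis of $X$ is an inclusion-minimal generator of $X$. The space is uniquely generated if every $X\subseteq E$ has exactly one basis. *)

(* Defs.v *)
From mathcomp Require Import all_boot.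
Set Implicit Arguments. Unset Strict Implicit. Unset Printing Implicit Defensive.

Definition violator_space (E : finType) (tau : {set E} -> {set E}) : Prop :=
  (forall Z : {set E}, Z \subset tau Z) /\
  (forall F G : {set E}, F \subset G -> G \subset tau F -> tau G = tau F).

Definition is_generator (E : finType) (tau : {set E} -> {set E}) (X B : {set E}) : Prop :=
  tau B = tau X.

Definition is_basis (E : finType) (tau : {set E} -> {set E}) (X B : {set E}) : Prop :=
  is_generator tau X B /\
  (forall B' : {set E}, B' \proper B -> ~ is_generator tau X B').

Definition uniquely_generated (E : finType) (tau : {set E} -> {set E}) : Prop :=
  forall X : {set E}, exists! B : {set E}, is_basis tau X B.

(* Main.v *)
Require Import Defs.
From mathcomp Require Import all_boot.

Lemma gen_has_basis (E : finType) (tau : {set E} -> {set E}) (X : {set E}) :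
  forall n (G : {set E}), #|G| <= n -> tau G = tau X ->
  exists B : {set E}, B \subset G /\ is_basis tau X B.
Proof.
elim=> [|n IH] G hG hT.
  have G0 : G = set0 by apply/eqP; rewrite -cards_eq0; case: #|G| hG.
  exists G; split => //; split => // B' hB'.
  by move: (proper_card hB'); rewrite G0 cards0.
case: (boolP [exists B' : {set E}, (B' \proper G) && (tau B' == tau X)]).
  move/existsP=> [B' /andP [hp /eqP hb]].
  have hc : #|B'| <= n by rewrite -ltnS; exact: leq_trans (proper_card hp) hG.
  have [B [hs hB]] := IH B' hc hb.
  exists B; split => //; exact: subset_trans hs (proper_sub hp).
move=> hn; exists G; split => //; split => // B' hp hb.
move/negP: hn; apply; apply/existsP; exists B'; rewrite hp /=; exact/eqP.
Qed.

Theorem mainTheorem17 (E : finType) (tau : {set E} -> {set E}) :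
  violator_space tau -> uniquely_generated tau ->
  forall X Y : {set E}, tau X = tau Y ->
    tau (X :&: Y) = tau X /\ tau (X :|: Y) = tau X.
Proof.
move=> [C1 C22] U X Y hXY.
have [B [hBX hB]] := gen_has_basis E tau X _ X (leqnn #|X|) (erefl (tau X)).
have [B2 [hB2Y hB2]] := gen_has_basis E tau Y _ Y (leqnn #|Y|) (erefl (tau Y)).
have hB2' : is_basis tau X B2.
  case: hB2 => g m; split; first by rewrite /is_generator hXY.
  move=> B' hp; rewrite /is_generator hXY; exact: m.
have [B0 [_ uniq]] := U X.
have e : B = B2 by rewrite -(uniq _ hB) -(uniq _ hB2').
subst B2.
have tB : tau B = tau X by case: hB.
split.
- rewrite -tB; apply: C22.
  + by rewrite subsetI hBX hB2Y.
  + by rewrite tB; apply: subset_trans (subsetIl _ _) (C1 X).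
- rewrite -tB; apply: C22.
  + exact: subset_trans hBX (subsetUl _ _).
  + by rewrite tB subUset C1 hXY C1.
Qed.
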